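(* Let $\tau = \{t \mid t \subseteq \Omega \}$, $\tau_{b} = \{t \mid \emptyset \neq t \subseteq \Omega, I_{\phi(t,f)} \geq b \}$, and $\phi$ a decomposable probability-of-success metric. Then for $b \geq 3$, \[ \frac{|\tau_{b}|}{|\tau|} \leq 2^{-b}. \]
   Context: Algorithmic search framework: finite discrete search space $\Omega$, target set $t\subseteq\Omega$ with indicator vector $\mathbf{t}$, fixed information resource $f$, and a search algorithm $\mathcal{A}$. A probability-of-success metric $\phi$ is decomposable if there exists a probability vector $\mathbf{P}_{\phi,f}$ over $\Omega$, not a function of $t$, with $\phi(t,f)=\mathbf{t}^{\top}\mathbf{P}_{\phi,f}=P_\phi(X\in t\mid f)$. The active information of expectations is $I_{\phi(t,f)} := -\log_2\frac{p}{\phi(t,f)}$, where $p=|t|/|\Omega|$ is the per-query success probability of uniform random sampling with replacement. *)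

(* Defs.v *)
From HB Require Import structures.
From mathcomp Require Import all_boot all_order all_algebra.
From mathcomp Require Import all_classical all_reals exp.
Set Implicit Arguments. Unset Strict Implicit. Unset Printing Implicit Defensive.
Import Order.TTheory GRing.Theory Num.Theory.
Local Open Scope ring_scope.

Definition log2 (R : realType) (x : R) : R := ln x / ln 2.

Definition prob_vector (R : realType) (Omega : finType) (P : Omega -> R) : Prop :=
  (forall x, 0 <= P x) /\ \sum_(x : Omega) P x = 1.

(* phi (the information resource f being fixed) is decomposable:
   phi(t) = t^T P for a probability vector P not depending on t. *)
Definition decomposable (R : realType) (Omega : finType) (phi : {set Omega} -> R) : Prop :=
  exists P : Omega -> R, prob_vector P /\ forall t : {set Omega}, phi t = \sum_(x in t) P x.

Definition unif_prob (R : realType) (Omega : finType) (t : {set Omega}) : R :=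
  #|t|%:R / #|Omega|%:R.

Definition active_info (R : realType) (Omega : finType) (phi : {set Omega} -> R)
  (t : {set Omega}) : R := - log2 (unif_prob R t / phi t).

Definition tau_b (R : realType) (Omega : finType) (phi : {set Omega} -> R) (b : R)
  : {set {set Omega}} := [set t : {set Omega} | (t != finset.set0) && (b <= active_info phi t)].

(* Main.v *)
Require Import Defs.
From mathcomp Require Import all_boot all_order all_algebra.
From mathcomp Require Import all_classical all_reals exp.
From mathcomp Require Import fingroup perm lra.
Import Order.TTheory GRing.Theory Num.Theory.
Local Open Scope ring_scope.

Lemma card_setT' (T : finType) : #|{set T}| = (2 ^ #|T|)%N.
Proof.
rewrite -cardsT -card_powerset; apply: eq_card => A.
by rewrite !inE finset.subsetT.
Qed.

Theorem theorem2 (R : realType) (Omega : finType) (phi : {set Omega} -> R)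
  (hphi : decomposable phi) (b : R) (hb : 3 <= b) :
  #|tau_b phi b|%:R / #|{set Omega}|%:R <= powR 2 (- b).
Proof.
case: hphi => P [[P0 P1] hP].
set N := #|Omega|.
set S := fun x : Omega => \sum_(t : {set Omega} | x \in t) (#|t|%:R : R)^-1.
have Ssym : forall x y, S x = S y.
  move=> x y; rewrite /S.
  have hK : cancel (fun t : {set Omega} => tperm x y @^-1: t)
                   (fun t : {set Omega} => tperm x y @^-1: t).
    by move=> t; apply/setP => z; rewrite !inE tpermK.
  rewrite (reindex_inj (can_inj hK)) /=.
  apply: eq_big => t; first by rewrite !inE tpermL.
  by move=> _; rewrite card_preimset //; apply: perm_inj.
have ln2 : 0 < ln (2 : R) by apply: ln_gt0; rewrite ltr1n.
have key : forall t, t \in tau_b phi b ->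
    1 <= powR 2 (-b) * N%:R * (phi t / #|t|%:R).
  move=> t; rewrite inE => /andP[tn0 hb'].
  have ct : (0 < #|t|)%N by rewrite card_gt0.
  have cN : (0 < N)%N by apply: leq_trans ct (max_card _).
  have phi0 : 0 <= phi t by rewrite hP; apply: sumr_ge0.
  have ctR : 0 < (#|t|%:R : R) by rewrite ltr0n.
  have cNR : 0 < (N%:R : R) by rewrite ltr0n.
  have uP : 0 < unif_prob R t by rewrite /unif_prob divr_gt0.
  case: (eqVneq (phi t) 0) => [e|ne].
    move: hb'; rewrite /active_info e invr0 mulr0 /log2 ln0 // mul0r oppr0.
    move=> h; exfalso; lra.
  have phiP : 0 < phi t by rewrite lt_neqAle eq_sym ne.
  have h1 : b * ln 2 <= ln (phi t / unif_prob R t).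
    move: hb'; rewrite /active_info /log2 -(invf_div (phi t)) lnV; last first.
      by rewrite posrE divr_gt0.
    by rewrite mulNr opprK ler_pdivlMr.
  have h2 : powR 2 b <= phi t / unif_prob R t.
    rewrite /powR; have -> : ((2:R) == 0) = false by rewrite pnatr_eq0.
    rewrite -[X in _ <= X]lnK; last by rewrite posrE divr_gt0.
    by rewrite ler_expR.
  have pb : 0 < powR 2 b by apply: powR_gt0.
  rewrite -mulrA; have -> : N%:R * (phi t / #|t|%:R) = phi t / unif_prob R t.
    by rewrite /unif_prob invf_div mulrCA mulrA.
  rewrite powRN -[X in X <= _](mulVf (lt0r_neq0 pb)); apply: ler_wpM2l => //.
  by rewrite invr_ge0 ltW.
have [tau0|[t0 t0in]] := set_0Vmem (tau_b phi b).
  by rewrite tau0 cards0 mul0r powR_ge0.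
have [x0 x0in] : exists x0, x0 \in t0.
  by move: t0in; rewrite inE => /andP[/set0Pn [x hx] _]; exists x.
set w := fun t : {set Omega} => phi t / (#|t|%:R : R).
have w0 : forall t, 0 <= w t.
  by move=> t; rewrite /w hP divr_ge0 // sumr_ge0.
have sumw : \sum_t w t = S x0.
  rewrite /w.
  under eq_bigr => t _ do rewrite hP mulr_suml big_mkcond /=.
  rewrite exchange_big /=.
  under eq_bigr => x _ do rewrite -big_mkcond /= -mulr_sumr -/(S x) (Ssym x x0).
  by rewrite -mulr_suml P1 mul1r.
have NS : N%:R * S x0 <= #|{set Omega}|%:R.
  have -> : N%:R * S x0 = \sum_x S x.
    rewrite (eq_bigr (fun _ => S x0)); last by move=> x _; rewrite (Ssym x x0).
    by rewrite sumr_const mulr_natl.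
  rewrite /S; under eq_bigr => x _ do rewrite big_mkcond /=.
  rewrite exchange_big /= -sumr_const.
  apply: ler_sum => t _; rewrite -big_mkcond /= sumr_const.
  case: (eqVneq #|t| 0%N) => [->|nz]; first by rewrite mulr0n ler01.
  by rewrite -[X in X <= _]mulr_natr mulVf ?pnatr_eq0.
have cS : (0 < #|{set Omega}|%:R :> R) by rewrite ltr0n; apply/card_gt0P; exists t0.
rewrite ler_pdivrMr //.
apply: (le_trans (y := powR 2 (-b) * N%:R * \sum_t w t)).
  rewrite -sumr_const mulr_sumr.
  apply: (le_trans (y := \sum_(t in tau_b phi b) powR 2 (- b) * N%:R * w t)).
    by apply: ler_sum => t tin; apply: key.
  rewrite [X in _ <= X](bigID (fun t => t \in tau_b phi b)) /= lerDl.
  apply: sumr_ge0 => t _; apply: mulr_ge0 => //.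
  by rewrite mulr_ge0 ?powR_ge0 ?ler0n.
rewrite sumw -mulrA; apply: ler_wpM2l; first by rewrite powR_ge0.
exact: NS.
Qed.
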